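(* Let $(\mathcal{A},\mathbf{m})$ be a multiarrangement in $\mathbb{Q}^l$ with $\mathcal{A}=\{H_1,\dots,H_n\}$, $H_i=\alpha_i^{-1}(0)$, where the $\alpha_i\in S_\mathbb{Z}=\mathbb{Z}[x_1,\dots,x_l]$ are linear forms such that no prime number divides any $\alpha_i$, and let $p$ be a good prime for $(\mathcal{A},\mathbf{m})$. If $p$ is not a zero divisor of $\operatorname{coker}(\varphi_\mathbb{Z})$, then the map $\pi_p^l\colon\operatorname{Ker}(\varphi_\mathbb{Z})\to D(\mathcal{A}_p,\mathbf{m})$ is surjective.
   Context: For a field $\mathbb{K}$ and $R=\mathbb{K}[x_1,\dots,x_l]$, for a multiarrangement with hyperplanes $\beta_i^{-1}(0)$ and multiplicities $\mathbf{m}_i\ge0$, $D=\{\delta=\sum_j f_j\partial_{x_j}: f_j\in R,\ \delta(\beta_i)\in\beta_i^{\mathbf{m}_i}R\ \forall i\}$, identified with a submodule of $R^l$. Let $S_p=\mathbb{F}_p[x_1,\dots,x_l]$, $\pi_p\colon S_\mathbb{Z}\to S_p$ reduction mod $p$, $\pi_p^k$ its componentwise extension to $S_\mathbb{Z}^k\to S_p^k$. A prime $p$ is good if $\pi_p(\alpha_i)\ne\pi_p(\alpha_j)$ for $i\ne j$; then $(\mathcal{A}_p,\mathbf{m})$ is the multiarrangement in $\mathbb{F}_p^l$ with hyperplanes $\pi_p(\alpha_i)^{-1}(0)$ of multiplicities $\mathbf{m}(H_i)$. Let $M(\mathcal{A},\mathbf{m})\subseteq S_\mathbb{Z}^n$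 be generated by $\alpha_i^{\mathbf{m}(H_i)}e_i$, $A(\mathcal{A})=(\partial\alpha_i/\partial x_j)_{i,j}$, and $\varphi_\mathbb{Z}\colon S_\mathbb{Z}^l\to S_\mathbb{Z}^n/M(\mathcal{A},\mathbf{m})$, $g\mapsto A(\mathcal{A})g$. The integer $p$ is a zero divisor of an $S_\mathbb{Z}$-module $N$ if $pv=0$ for some nonzero $v\in N$. *)

(* Defs.v *)
From HB Require Import structures.
From mathcomp Require Import all_boot all_order all_algebra.
From mathcomp Require Import mpoly.
Set Implicit Arguments. Unset Strict Implicit. Unset Printing Implicit Defensive.
Import Order.TTheory GRing.Theory Num.Theory.
Local Open Scope ring_scope.

(* S_Z = {mpoly int[l]},  S_p = {mpoly 'F_p[l]}, S_Q = {mpoly rat[l]}. *)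

Definition rdvd (R : comNzRingType) (g f : R) : Prop := exists q : R, f = q * g.

Definition is_linear_form (R : comNzRingType) (l : nat) (beta : {mpoly R[l]}) : Prop :=
  exists c : 'I_l -> R, beta = \sum_(j < l) c j *: 'X_j.

Definition deriv_apply (R : comNzRingType) (l : nat) (f : 'I_l -> {mpoly R[l]})
  (beta : {mpoly R[l]}) : {mpoly R[l]} :=
  \sum_(j < l) f j * mderiv j beta.

(* The module of logarithmic derivations D(beta, m) (as a predicate on R^l). *)
Definition logder (R : comNzRingType) (l n : nat) (beta : 'I_n -> {mpoly R[l]})
  (m : 'I_n -> nat) (f : 'I_l -> {mpoly R[l]}) : Prop :=
  forall i : 'I_n, rdvd (beta i ^+ m i) (deriv_apply f (beta i)).

Definition redp (p l : nat) (f : {mpoly int[l]}) : {mpoly 'F_p[l]} :=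
  map_mpoly (fun z : int => z%:~R) f.

Definition Amat (l n : nat) (alpha : 'I_n -> {mpoly int[l]}) (i : 'I_n) (j : 'I_l)
  : {mpoly int[l]} := mderiv j (alpha i).

(* v in S_Z^n lies in  M(A,m) + Im(g |-> A(A) g), i.e. v = 0 in coker(phi_Z). *)
Definition in_im_phi (l n : nat) (alpha : 'I_n -> {mpoly int[l]}) (m : 'I_n -> nat)
  (v : 'I_n -> {mpoly int[l]}) : Prop :=
  exists (g : 'I_l -> {mpoly int[l]}) (c : 'I_n -> {mpoly int[l]}),
    forall i : 'I_n, v i = \sum_(j < l) Amat alpha i j * g j + c i * alpha i ^+ m i.

Definition zero_divisor_coker (l n : nat) (alpha : 'I_n -> {mpoly int[l]})
  (m : 'I_n -> nat) (p : nat) : Prop :=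
  exists v : 'I_n -> {mpoly int[l]},
    ~ in_im_phi alpha m v /\ in_im_phi alpha m (fun i => p%:R * v i).

Definition in_ker_phi (l n : nat) (alpha : 'I_n -> {mpoly int[l]}) (m : 'I_n -> nat)
  (g : 'I_l -> {mpoly int[l]}) : Prop :=
  forall i : 'I_n, rdvd (alpha i ^+ m i) (\sum_(j < l) Amat alpha i j * g j).

Definition hyperplaneQ (l : nat) (alpha : {mpoly int[l]}) (v : 'I_l -> rat) : Prop :=
  (map_mpoly (fun z : int => z%:~R : rat) alpha).@[v] = 0.

Definition good_prime (l n : nat) (alpha : 'I_n -> {mpoly int[l]}) (p : nat) : Prop :=
  forall i j : 'I_n, i != j -> redp p (alpha i) != redp p (alpha j).

(* Main.v *)
Require Import Defs.
From HB Require Import structures.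
From mathcomp Require Import all_boot all_order all_algebra.
From mathcomp Require Import mpoly.
From mathcomp Require Import ring.
From Stdlib Require Import Classical.
Import Order.TTheory GRing.Theory Num.Theory.
Local Open Scope ring_scope.

Section Helpers.
Variables (p l : nat).
Hypothesis pp : prime p.

Definition liftp (f : {mpoly 'F_p[l]}) : {mpoly int[l]} :=
  \sum_(k <- msupp f) ((nat_of_ord (f@_k))%:Z) *: 'X_[k].

Lemma redp_liftp f : redp p (liftp f) = f.
Proof.
rewrite /liftp /redp rmorph_sum /= [RHS]mpolyE.
apply: eq_bigr => k _.
rewrite map_mpolyZ map_mpolyX /=.
congr (_ *: _).
set c := f@_k.
change ((nat_of_ord c)%:R = c).
exact: natr_Zp.
Qed.

Lemma Fp_nat_eq0 (k : nat) : (k%:R : 'F_p) = 0 -> (p %| k)%N.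
Proof.
move=> Hk; have := val_Fp_nat pp k; rewrite Hk /= => H.
by rewrite /dvdn H.
Qed.



Lemma Fp_intr_eq0 (z : int) : (z%:~R : 'F_p) = 0 -> (Posz p %| z)%Z.
Proof.
case: z => k.
  by move=> /Fp_nat_eq0; rewrite dvdzE.
rewrite NegzE mulrNz => /eqP; rewrite oppr_eq0 => /eqP /Fp_nat_eq0.
by rewrite dvdzE.
Qed.

Definition divp (f : {mpoly int[l]}) : {mpoly int[l]} :=
  \sum_(k <- msupp f) (f@_k %/ p)%Z *: 'X_[k].

Lemma redp_ker f : redp p f = 0 -> f = p%:R * divp f.
Proof.
move=> H0.
rewrite /divp mulr_sumr {1}[f]mpolyE.
apply: eq_bigr => k _.
have Hk : (Posz p %| f@_k)%Z.
  apply: Fp_intr_eq0.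
  by have := congr1 (mcoeff k) H0; rewrite /redp mcoeff_map_mpoly mcoeff0.
rewrite mulr_natl scalerMnl -mulr_natr natz.
by rewrite divzK.
Qed.

Lemma redp_mderiv i (f : {mpoly int[l]}) : redp p (mderiv i f) = mderiv i (redp p f).
Proof.
apply/mpolyP => k.
by rewrite /redp mcoeff_map_mpoly !mcoeff_mderiv mcoeff_map_mpoly raddfMn.
Qed.

Lemma redp_p : redp p (p%:R : {mpoly int[l]}) = 0.
Proof.
by rewrite /redp rmorph_nat -mpolyC_nat pchar_Fp_0 // mpolyC0.
Qed.


Lemma redpB (f g : {mpoly int[l]}) : redp p (f - g) = redp p f - redp p g.
Proof. by rewrite /redp rmorphB. Qed.
Lemma redpM (f g : {mpoly int[l]}) : redp p (f * g) = redp p f * redp p g.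
Proof. by rewrite /redp rmorphM. Qed.
Lemma redpX (f : {mpoly int[l]}) k : redp p (f ^+ k) = redp p f ^+ k.
Proof. by rewrite /redp rmorphXn. Qed.
Lemma redp_sum (F : 'I_l -> {mpoly int[l]}) :
  redp p (\sum_(j < l) F j) = \sum_(j < l) redp p (F j).
Proof. by rewrite /redp rmorph_sum. Qed.

End Helpers.

Theorem proposition4p3 (l n : nat) (alpha : 'I_n -> {mpoly int[l]})
  (m : 'I_n -> nat) (p : nat) :
  (forall i : 'I_n, is_linear_form (alpha i)) ->
  (* the hyperplanes H_i = alpha_i^{-1}(0) in Q^l are pairwise distinct *)
  (forall i j : 'I_n, i != j ->
     ~ (forall v : 'I_l -> rat, hyperplaneQ (alpha i) v <-> hyperplaneQ (alpha j) v)) ->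
  (* no prime number divides any alpha_i *)
  (forall (q : nat) (i : 'I_n), prime q -> ~ rdvd (q%:R : {mpoly int[l]}) (alpha i)) ->
  prime p ->
  good_prime alpha p ->
  ~ zero_divisor_coker alpha m p ->
  forall delta : 'I_l -> {mpoly 'F_p[l]},
    logder (fun i => redp p (alpha i)) m delta ->
    exists g : 'I_l -> {mpoly int[l]},
      in_ker_phi alpha m g /\ (forall j : 'I_l, redp p (g j) = delta j).

Proof.
move=> _ _ _ pp _ Hnz delta HD.
have HD' : forall i, exists q : {mpoly 'F_p[l]},
    deriv_apply delta (redp p (alpha i)) == q * redp p (alpha i) ^+ m i.
  by move=> i; case: (HD i) => q Hq; exists q; apply/eqP.
pose q i := xchoose (HD' i).
have Hq : forall i, deriv_apply delta (redp p (alpha i)) = q i * redp p (alpha i) ^+ m i.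
  by move=> i; apply/eqP; exact: (xchooseP (HD' i)).
pose g0 j := liftp p _ (delta j).
pose c i := liftp p _ (q i).
pose e i := \sum_(j < l) Amat alpha i j * g0 j - c i * alpha i ^+ m i.
have He : forall i, redp p (e i) = 0.
  move=> i; rewrite /e redpB redp_sum redpM redpX /c redp_liftp.
  rewrite -Hq /deriv_apply; apply/eqP; rewrite subr_eq0; apply/eqP.
  apply: eq_bigr => j _; rewrite redpM /g0 redp_liftp /Amat (redp_mderiv p).
  by rewrite mulrC.
pose w i := divp p _ (e i).
have Hw : forall i, e i = p%:R * w i by move=> i; apply: (redp_ker _ _ pp).
have Him : in_im_phi alpha m (fun i => p%:R * w i).
  exists g0, (fun i => - c i) => i.
  by rewrite -Hw /e mulNr.
have : in_im_phi alpha m w.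
  by apply: NNPP => Hn; apply: Hnz; exists w.
case=> h [e' He'].
exists (fun j => g0 j - p%:R * h j); split.
  move=> i; exists (c i + p%:R * e' i).
  have -> : \sum_(j < l) Amat alpha i j * (g0 j - p%:R * h j)
     = \sum_(j < l) Amat alpha i j * g0 j - p%:R * \sum_(j < l) Amat alpha i j * h j.
    rewrite mulr_sumr -sumrB; apply: eq_bigr => j _.
    by rewrite mulrBr mulrCA.
  have -> : \sum_(j < l) Amat alpha i j * g0 j = e i + c i * alpha i ^+ m i.
    by rewrite /e subrK.
  have -> : \sum_(j < l) Amat alpha i j * h j = w i - e' i * alpha i ^+ m i.
    by rewrite He' addrK.
  rewrite Hw; ring.
move=> j; rewrite redpB redpM (redp_p _ _ pp) mul0r subr0 /g0.
exact: redp_liftp.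
Qed.
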